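(* Let $\mathcal{H}$ be a hypertree, $B$ a basic set of $\mathcal{H}$, and $u,v$ two different elements of $B$. Then [$I_\mathcal{H}(uv)=B$ and $uv$ is an edge of some host tree of $\mathcal{H}$] if and only if $u$ and $v$ lie in two different connected components of the 2-section of $\overline{\mathcal{H}_B}$.
   Context: A hypergraph $\mathcal{H}$ has a finite vertex set $V(\mathcal{H})$ and a finite family of nonempty subsets (edges). A host tree is a tree on $V(\mathcal{H})$ in which every edge induces a connected subgraph; a hypertree is a hypergraph with a host tree. For $V'\subseteq V(\mathcal{H})$, $I_\mathcal{H}(V')$ is the intersection of all edges containing $V'$, or $V(\mathcal{H})$ if none does; $I_\mathcal{H}(uv)=I_\mathcal{H}(\{u,v\})$. For $A\subseteq V(\mathcal{H})$, $\overline{\mathcal{H}_A}$ is the hypergraph on $V(\mathcal{H})$ whose edges are the edges of $\mathcal{H}$ not containing $A$. The 2-section of a hypergraph is the graph on its vertices where two distinct vertices are adjacent iff some edge contains both. A union of sets is connected if the intersection graph of the sets is connected. $Comp(\mathcal{H})$ is the hypergraph without repeated edges on $V(\mathcal{H})$ whose edges are $V(\mathcal{H})$, all singletons, and all proper subsets obtainable from edges of $\mathcal{H}$ by repeated nonempty intersections and connected unions; a basic set of $\mathcal{H}$ is an edge of $Comp(\mathcal{H})$ with more than one vertex that is not a connected union of strictly smaller edges of $Comp(\mathcal{H})$. *)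

(* Defs.v *)
From mathcomp Require Import all_boot.
Set Implicit Arguments. Unset Strict Implicit. Unset Printing Implicit Defensive.

Section Hyper.
Variable V : finType.

(* A hypergraph on the vertex set V (the whole finite type) is a finite
   family (sequence, repetitions allowed) of nonempty subsets of V. *)
Definition hyp_nonempty (H : seq {set V}) : Prop := forall e, e \in H -> e != set0.

Definition simple_graph (T : {set {set V}}) : Prop := forall e, e \in T -> #|e| = 2.

Definition adj_in (T : {set {set V}}) (S : {set V}) : rel V :=
  fun x y => [&& x \in S, y \in S & [set x; y] \in T].

Definition induces_connected (T : {set {set V}}) (S : {set V}) : Prop :=
  forall x y, x \in S -> y \in S -> connect (adj_in T S) x y.

(* A tree on V: a connected graph in which every edge is a bridge
   (i.e. a minimally connected graph). *)
Definition is_tree (T : {set {set V}}) : Prop :=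
  [/\ simple_graph T, induces_connected T setT &
      forall x y, [set x; y] \in T -> ~~ connect (adj_in (T :\ [set x; y]) setT) x y].

Definition host_tree (H : seq {set V}) (T : {set {set V}}) : Prop :=
  is_tree T /\ forall e, e \in H -> induces_connected T e.

Definition hypertree (H : seq {set V}) : Prop :=
  hyp_nonempty H /\ exists T, host_tree H T.

(* I_H(A): intersection of all edges containing A (setT if there are none). *)
Definition I_H (H : seq {set V}) (A : {set V}) : {set V} :=
  \big[@setI V/setT]_(e <- H | A \subset (e : {set V})) e.

Definition Hbar (H : seq {set V}) (A : {set V}) : seq {set V} :=
  [seq e <- H | ~~ (A \subset (e : {set V}))].

Definition two_section (H : seq {set V}) : rel V :=
  fun x y => (x != y) && has (fun e : {set V} => (x \in e) && (y \in e)) H.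

Definition inter_rel (F : {set {set V}}) : rel {set V} :=
  fun A B => [&& A \in F, B \in F & A :&: B != set0].
Definition inter_connected (F : {set {set V}}) : Prop :=
  forall A B, A \in F -> B \in F -> connect (inter_rel F) A B.

Inductive obtainable (H : seq {set V}) : {set V} -> Prop :=
| ob_edge e : e \in H -> obtainable H e
| ob_inter A B : obtainable H A -> obtainable H B -> A :&: B != set0 ->
    obtainable H (A :&: B)
| ob_union (F : {set {set V}}) : F != set0 ->
    (forall A, A \in F -> obtainable H A) -> inter_connected F ->
    obtainable H (\bigcup_(A in F) A).

Definition comp_edge (H : seq {set V}) (X : {set V}) : Prop :=
  X = setT \/ (exists x, X = [set x]) \/ (obtainable H X /\ X \proper setT).

Definition basic_set (H : seq {set V}) (B : {set V}) : Prop :=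
  [/\ comp_edge H B, 1 < #|B| &
      ~ exists F : {set {set V}},
          [/\ forall A, A \in F -> comp_edge H A /\ A \proper B,
              inter_connected F &
              B = \bigcup_(A in F) A]].

End Hyper.

(* Main.v *)
Require Import Defs.
From mathcomp Require Import all_boot.
Set Implicit Arguments. Unset Strict Implicit. Unset Printing Implicit Defensive.

Section H.
Variable V : finType.
Implicit Types (F E : {set {set V}}) (S : {set V}).

Lemma set2_inv (a b c d : V) : [set a; b] = [set c; d] ->
  (a = c /\ b = d) \/ (a = d /\ b = c).
Proof.
move=> E.
have ha : a \in [set c; d] by rewrite -E set21.
have hb : b \in [set c; d] by rewrite -E set22.
have hc : c \in [set a; b] by rewrite E set21.
have hd : d \in [set a; b] by rewrite E set22.
move: ha hb hc hd; rewrite !inE.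
by do 4 (case/orP=> /eqP ?); subst; auto.
Qed.

Lemma adj_sym F S : symmetric (adj_in F S).
Proof.
move=> x y; rewrite /adj_in setUC.
by case: (x \in S); case: (y \in S).
Qed.

Lemma csym F S : connect_sym (adj_in F S).
Proof. exact: sym_connect_sym (@adj_sym F S). Qed.

Lemma conn_mono F F' S S' a b : F \subset F' -> S \subset S' ->
  connect (adj_in F S) a b -> connect (adj_in F' S') a b.
Proof.
move=> sF sS; apply: connect_sub => c d /and3P[cS dS cdF].
apply: connect1; rewrite /adj_in (subsetP sS _ cS) (subsetP sS _ dS).
by rewrite (subsetP sF _ cdF).
Qed.

Lemma conn_add F E S (p q a b : V) :
  F \subset [set p; q] |: E -> connect (adj_in F S) a b ->
  [\/ connect (adj_in E S) a b,
      connect (adj_in E S) a p /\ connect (adj_in E S) q b |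
      connect (adj_in E S) a q /\ connect (adj_in E S) p b].
Proof.
move=> sF /connectP[s]; elim: s a => [|w s IH] a /=.
  by move=> _ ->; apply: Or31; apply: connect0.
case/andP=> aw pw eb; have := IH w pw eb.
move: aw => /and3P[aS wS].
move/(subsetP sF); rewrite in_setU1 => /orP[/eqP E1|awE].
  case: (set2_inv E1) => [[-> ->]|[-> ->]].
  - case=> [c|[c1 c2]|[c1 c2]].
    + by apply: Or32; split=> //; apply: connect0.
    + by apply: Or32; split=> //; apply: connect0.
    + by apply: Or31.
  - case=> [c|[c1 c2]|[c1 c2]].
    + by apply: Or33; split=> //; apply: connect0.
    + by apply: Or31.
    + by apply: Or33; split=> //; apply: connect0.
have st : connect (adj_in E S) a w by apply: connect1; rewrite /adj_in aS wS awE.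
case=> [c|[c1 c2]|[c1 c2]].
- by apply: Or31; apply: connect_trans st c.
- by apply: Or32; split=> //; apply: connect_trans st c1.
- by apply: Or33; split=> //; apply: connect_trans st c1.
Qed.

Lemma cut_path F (P : pred V) a s :
  path (adj_in F setT) a s -> uniq (a :: s) -> P a -> ~~ P (last a s) ->
  exists x y, [/\ [set x; y] \in F, P x, ~~ P y,
     connect (adj_in (F :\ [set x; y]) setT) a x &
     connect (adj_in (F :\ [set x; y]) setT) y (last a s)]
     /\ (x \in a :: s /\ y \in a :: s).
Proof.
elim: s a => [|w s IH] a /=; first by move=> _ _ ->.
case/andP=> aw pw /andP[nas us] Pa Pl.
case Pw: (P w).
  have [x [y [[xyF Px Py c1 c2] [xs ys]]]] := IH w pw us Pw Pl.
  exists x, y; split; last by rewrite !inE in xs ys *; rewrite xs ys !orbT.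
  split=> //; apply: connect_trans c1; apply: connect1.
  move: aw => /and3P[_ _ awF]; rewrite /adj_in !in_setT in_setD1 awF andbT /=.
  apply/negP => /eqP E; move: (set21 a w); rewrite E in_set2.
  by case/orP=> /eqP ea; move: nas; rewrite ea ?xs ?ys.
exists a, w; move: aw => /and3P[_ _ awF]; split; last by rewrite !inE !eqxx ?orbT.
split=> //; first by rewrite Pw.
apply/connectP; exists s => //.
apply: (@sub_in_path _ (predC1 a)) pw; last first.
  by apply/allP => z zs /=; apply/eqP => za; move: nas; rewrite -za zs.
  move=> c d; rewrite !inE => ca da /and3P[_ _ cdF].
  rewrite /adj_in !in_setT in_setD1 cdF andbT /=.
  apply/negP => /eqP E; move: (set21 a w); rewrite -E in_set2.
  by case/orP=> /eqP ea; [move: ca | move: da]; rewrite ea eqxx.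
Qed.

End H.


Section H2.
Variable V : finType.

Lemma I_sub (H : seq {set V}) (A e : {set V}) : e \in H -> A \subset e -> I_H H A \subset e.
Proof.
rewrite /I_H; elim: H => [|f H IH] //=; rewrite in_cons big_cons.
case/orP=> [/eqP <- Ae|eH Ae]; first by rewrite Ae subsetIl.
case: ifP => _; last exact: IH.
by apply: subset_trans (subsetIr _ _) (IH eH Ae).
Qed.

Lemma sub_I (H : seq {set V}) (A X : {set V}) :
  (forall e, e \in H -> A \subset e -> X \subset e) -> X \subset I_H H A.
Proof.
rewrite /I_H; elim: H => [|f H IH] h /=; first by rewrite big_nil subsetT.
have h' : forall e, e \in H -> A \subset e -> X \subset e.
  by move=> e eH; apply: h; rewrite in_cons eH orbT.
rewrite big_cons; case: ifP => Af; last exact: IH.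
by rewrite subsetI h ?mem_head //= IH.
Qed.

Lemma chain (G : rel V) (F : {set {set V}}) A p :
  path (inter_rel F) A p -> A \in F ->
  (forall C, C \in F -> {in C &, forall a b, connect G a b}) ->
  forall a b, a \in A -> b \in last A p -> connect G a b.
Proof.
elim: p A => [|W p IH] A /=; first by move=> _ AF h a b aA bA; exact: h AF a b aA bA.
case/andP=> /and3P[AF WF /set0Pn[z zAW]] pW _ h a b aA bl.
move: zAW; rewrite inE => /andP[zA zW].
apply: connect_trans (h A AF a z aA zA) _.
exact: IH pW WF h z b zW bl.
Qed.

Lemma ob_inv (H : seq {set V}) (G : rel V) (I X : {set V}) :
  (forall e, e \in H -> I \subset e \/ {in e &, forall a b, connect G a b}) ->
  obtainable H X -> I \subset X \/ {in X &, forall a b, connect G a b}.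
Proof.
move=> hE; elim=> {X}.
- by move=> e eH; exact: hE.
- move=> A C _ [IA|wA] _ [IC|wC] _.
  + by left; rewrite subsetI IA IC.
  + by right=> a b; rewrite !inE => /andP[_ aC] /andP[_ bC]; exact: wC.
  + by right=> a b; rewrite !inE => /andP[aA _] /andP[bA _]; exact: wA.
  + by right=> a b; rewrite !inE => /andP[_ aC] /andP[_ bC]; exact: wC.
- move=> F _ _ IHF cF.
  case: (boolP [exists A in F, I \subset A]) => [/existsP[A /andP[AF IA]]|nex].
    by left; apply: subset_trans IA (bigcup_sup _ AF).
  right=> a b /bigcupP[A AF aA] /bigcupP[C CF bC].
  have hw : forall D, D \in F -> {in D &, forall a b, connect G a b}.
    move=> D DF; case: (IHF D DF) => // ID.
    by case/negP: nex; apply/existsP; exists D; rewrite DF ID.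
  case/connectP: (cF A C AF CF) => p pp eC.
  by apply: (chain pp AF hw aA); rewrite -eC.
Qed.

End H2.

Unset Implicit Arguments. Set Strict Implicit.

Theorem mainTheorem12 (V : finType) (H : seq {set V}) (B : {set V}) (u v : V) :
  hypertree H -> basic_set H B -> u \in B -> v \in B -> u != v ->
  ((I_H H [set u; v] = B /\ exists T, host_tree H T /\ [set u; v] \in T)
   <-> ~~ connect (two_section (Hbar H B)) u v).
Proof.
move=> [_ [T hT0]] [cB cardB _] uB vB uv.
set G := two_section (Hbar H B).
have uvsub : forall e : {set V}, u \in e -> v \in e -> [set u; v] \subset e.
  by move=> e ue ve; apply/subsetP => z; rewrite in_set2 => /orP[]/eqP->.
split.
  move=> [IB [T1 [[[_ _ br] hostT] uvT]]]; apply/negP => cuv.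
  apply: (negP (br u v uvT)).
  apply: (connect_sub _ cuv) => c d /andP[cd /hasP[e eHb /andP[ce de]]].
  move: eHb; rewrite mem_filter => /andP[nBe eH].
  apply: (connect_sub _ (hostT e eH c d ce de)) => c' d' /and3P[c'e d'e cdT].
  apply: connect1; rewrite /adj_in !in_setT in_setD1 cdT andbT /=.
  apply/negP => /eqP E; apply: (negP nBe); rewrite -IB; apply: I_sub eH _.
  by apply: uvsub; [move: (set21 u v) | move: (set22 u v)];
    rewrite -E in_set2 => /orP[]/eqP->.
move=> nc; split.
  apply/eqP; rewrite eqEsubset; apply/andP; split.
    case: cB => [->|[[x Ex]|[obB _]]]; first exact: subsetT.
      by move: uB vB uv; rewrite Ex !inE => /eqP-> /eqP->; rewrite eqxx.
    suff hE : forall e, e \in H -> I_H H [set u; v] \subset e \/ {in e &, forall a b, connect G a b}.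
      case: (ob_inv hE obB) => [//| w]; by case/negP: nc; apply: w.
    move=> e eH; case: (boolP (B \subset e)) => Be.
      by left; apply: I_sub eH _; apply: uvsub; apply: (subsetP Be).
    right=> a b ae be; case: (eqVneq a b) => [->|ab]; first exact: connect0.
    apply: connect1; rewrite /G /two_section ab /=; apply/hasP; exists e.
      by rewrite mem_filter Be.
    by rewrite ae be.
  apply: sub_I => e eH uve; apply/negPn/negP => nBe; case/negP: nc.
  apply: connect1; rewrite /G /two_section uv /=; apply/hasP; exists e.
    by rewrite mem_filter nBe.
  by rewrite !(subsetP uve) ?set21 ?set22.
case: hT0 => [[sT cT brT] hostT].
move: (cT u v (in_setT _) (in_setT _)) => /connectP[s ps].
case: (shortenP ps) => s' ps' us' _ ev.
have nPl : ~~ connect G u (last u s') by rewrite -ev.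
have [x [y [[xyT Px nPy cux cyv] _]]] :=
  @cut_path V T (connect G u) u s' ps' us' (connect0 _ _) nPl.
rewrite -ev in cyv.
set D := T :\ [set x; y].
have K : ~~ connect (adj_in D setT) u v.
  apply/negP => cuv'; apply: (negP (brT x y xyT)).
  rewrite -/D; apply: (connect_trans _ (connect_trans cuv' _)).
    by rewrite csym.
  by rewrite csym.
have nxy : ~~ connect G x y.
  by apply/negP => c; case/negP: nPy; apply: connect_trans Px c.
have xny : x != y.
  by apply/eqP => exy; move: nPy; rewrite -exy Px.
set T' := [set u; v] |: D.
have DT' : D \subset T' by apply: subsetUr.
have uvT' : [set u; v] \in T' by apply: setU11.
have xyc : connect (adj_in T' setT) x y.
  apply: (connect_trans (conn_mono DT' (subxx _) _)).
    by rewrite csym; exact: cux.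
  have uvc : adj_in T' setT u v by rewrite /adj_in !in_setT uvT'.
  apply: (connect_trans (connect1 uvc)).
  by apply: (conn_mono DT' (subxx _)); rewrite csym.
exists T'; split=> //; split.
  split.
  - move=> e; rewrite in_setU1 => /orP[/eqP->|]; first by rewrite cards2 uv.
    by rewrite in_setD1 => /andP[_ /sT].
  - move=> c d _ _; apply: (connect_sub _ (cT c d (in_setT _) (in_setT _))).
    move=> c' d' /and3P[_ _ cdT].
    case: (eqVneq [set c'; d'] [set x; y]) => E.
      by case: (set2_inv E) => [[-> ->]|[-> ->]] //; rewrite csym.
    by apply: connect1; rewrite /adj_in !in_setT in_setU1 in_setD1 E cdT orbT.
  - move=> a b; rewrite in_setU1 in_setD1.
    case: (eqVneq [set a; b] [set u; v]) => E /=.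
      move=> _; apply/negP => c.
      have : connect (adj_in D setT) a b.
        apply: (conn_mono _ (subxx _) c); apply/subsetP => z.
        by rewrite E !inE; case: (z == [set u; v]).
      case: (set2_inv E) => [[-> ->]|[-> ->]]; first by apply/negP.
      by rewrite csym; apply/negP.
    move=> /andP[nab abT]; apply/negP => c.
    have sub : T' :\ [set a; b] \subset [set u; v] |: (D :\ [set a; b]).
      apply/subsetP => z; rewrite !inE.
      by case: (z == [set u; v]); case: (z == [set a; b]).
    have ab : connect (adj_in D setT) a b.
      by apply: connect1; rewrite /adj_in !in_setT in_setD1 nab abT.
    have DD : D :\ [set a; b] \subset D by apply: subD1set.
    case: (conn_add sub c) => [c1|[c1 c2]|[c1 c2]].
    + apply: (negP (brT a b abT)); apply: (conn_mono _ (subxx _) c1).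
      by apply/subsetP => z; rewrite !inE; case: (z == [set a; b]) => //= /andP[].
    + case/negP: K; move/(conn_mono DD (subxx _)): c1; move/(conn_mono DD (subxx _)): c2.
      move=> c2 c1; rewrite csym in c1; rewrite csym in c2.
      exact: connect_trans c1 (connect_trans ab c2).
    + case/negP: K; move/(conn_mono DD (subxx _)): c1; move/(conn_mono DD (subxx _)): c2.
      move=> c2 c1; rewrite csym in ab.
      exact: connect_trans c2 (connect_trans ab c1).
move=> e eH c d ce de.
apply: (connect_sub _ (hostT e eH c d ce de)) => c' d' /and3P[c'e d'e cdT].
case: (eqVneq [set c'; d'] [set x; y]) => E; last first.
  by apply: connect1; rewrite /adj_in c'e d'e in_setU1 in_setD1 E cdT orbT.
have xe : x \in e by move: (set21 x y); rewrite -E in_set2 => /orP[]/eqP->.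
have ye : y \in e by move: (set22 x y); rewrite -E in_set2 => /orP[]/eqP->.
have Be : B \subset e.
  apply/negPn/negP => nBe; case/negP: nxy; apply: connect1.
  rewrite /G /two_section xny /=; apply/hasP; exists e; first by rewrite mem_filter nBe.
  by rewrite xe ye.
have ue := subsetP Be u uB.
have ve := subsetP Be v vB.
have TxyD : T \subset [set x; y] |: D.
  by apply/subsetP => z; rewrite !inE; case: (z == [set x; y]).
have DeD : forall a b, connect (adj_in D e) a b -> connect (adj_in D setT) a b.
  by move=> a b; apply: conn_mono (subxx _) (subsetT _).
have xu : connect (adj_in D e) x u.
  case: (conn_add TxyD (hostT e eH x u xe ue)) => [//|[_ c2]|[c1 _]].
    case/negP: (brT x y xyT); rewrite csym -/D.
    exact: connect_trans (DeD _ _ c2) cux.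
  by case/negP: (brT x y xyT); exact: DeD.
have yv : connect (adj_in D e) y v.
  case: (conn_add TxyD (hostT e eH y v ye ve)) => [//|[c1 _]|[_ c2]].
    by case/negP: (brT x y xyT); rewrite csym; exact: DeD.
  by case/negP: (brT x y xyT); apply: connect_trans (DeD _ _ c2) _; rewrite csym; exact: cyv.
have De' : forall a b, connect (adj_in D e) a b -> connect (adj_in T' e) a b.
  by move=> a b; apply: conn_mono DT' (subxx _).
have uve : adj_in T' e u v by rewrite /adj_in ue ve uvT'.
have cxy : connect (adj_in T' e) x y.
  apply: connect_trans (De' _ _ xu) (connect_trans (connect1 uve) _).
  by rewrite csym; apply: De'.
by case: (set2_inv E) => [[-> ->]|[-> ->]] //; rewrite csym.
Qed.
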